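(* For every $n\ge 2$, the number of permutations in $\mathcal{S}_{n,1}^{1\prec n}(1324)$ equals the number of $1324$-avoiding vertical dominoes with $n-2$ points; more precisely, there is an explicit bijection between these two sets.
   Context: $\mathcal{S}_n(1324)$ denotes the set of permutations of $\{1,\dots,n\}$ (written in one-line notation) that avoid the pattern $1324$. For $a,k\ge1$, $\mathcal{S}_{n,k}^{a\prec n}(1324)$ is the set of $\sigma\in\mathcal{S}_n(1324)$ such that $\sigma^{-1}(n)-\sigma^{-1}(a)=k$ and $\sigma^{-1}(b)>\sigma^{-1}(n)$ for every $b\in\{1,\dots,a-1\}$. Thus $\mathcal{S}_{n,1}^{1\prec n}(1324)$ consists of the $1324$-avoiding permutations in which the entry $1$ is immediately followed by the entry $n$. A $1324$-avoiding vertical domino with $m$ points is a pair $(\pi,h)$ where $\pi$ is a permutation of $\{1,\dots,m\}$ avoiding $1324$ and $h\in\{0,1,\dots,m\}$ is a horizontal cut such that the subsequence of $\pi$ formed by the values $\le h$ (the bottom cell) is order-isomorphic to a $132$-avoiding permutation and the subsequence formed by the values $>h$ (the top cell) is order-isomorphic to a $213$-avoiding permutation; two dominoes are different if they differ in $\pi$ or in $h$. *)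

(* Defs.v *)
From mathcomp Require Import all_boot all_fingroup.
Set Implicit Arguments. Unset Strict Implicit. Unset Printing Implicit Defensive.

Definition order_iso (t p : seq nat) : bool :=
  (size t == size p) &&
  [forall i : 'I_(size p), forall j : 'I_(size p),
     (nth 0 t i < nth 0 t j) == (nth 0 p i < nth 0 p j)].

Definition contains (p s : seq nat) : bool :=
  [exists m : (size s).-tuple bool, order_iso (mask m s) p].

Definition avoids (p s : seq nat) : bool := ~~ contains p s.

(* One-line notation of a permutation of {1,...,n}: sigma : 'S_n acts on
   {0,...,n-1}, and we shift values by one. *)
Definition word n (s : 'S_n) : seq nat := [seq (s i).+1 | i <- enum 'I_n].

(* 0-based position of the value x in the one-line notation (sigma^{-1}(x)
   up to a common shift, which is irrelevant for differences/comparisons). *)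
Definition pos n (s : 'S_n) (x : nat) : nat := index x (word s).

Definition Snk (n k a : nat) : {set 'S_n} :=
  [set s : 'S_n | [&& avoids [:: 1; 3; 2; 4] (word s),
                      pos s n == pos s a + k &
                      all (fun b => pos s n < pos s b) (iota 1 a.-1)]].

Definition dominoes (m : nat) : {set 'S_m * 'I_m.+1} :=
  [set d : 'S_m * 'I_m.+1 |
     [&& avoids [:: 1; 3; 2; 4] (word d.1),
         avoids [:: 1; 3; 2] [seq v <- word d.1 | v <= d.2] &
         avoids [:: 2; 1; 3] [seq v <- word d.1 | d.2 < v]]].

(* Main.v *)
Require Import Defs.
From mathcomp Require Import all_boot all_fingroup zify.
Set Implicit Arguments. Unset Strict Implicit. Unset Printing Implicit Defensive.

Lemma order_isoP t p : reflect (size t = size p /\ forall i j, i < size p -> j < size p ->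
   (nth 0 t i < nth 0 t j) = (nth 0 p i < nth 0 p j)) (order_iso t p).
Proof.
apply: (iffP andP) => [[/eqP hs /forallP H] | [hs H]]; split => //.
  move=> i j hi hj; exact: (eqP (forallP (H (Ordinal hi)) (Ordinal hj))).
by apply/eqP.
by apply/forallP => i; apply/forallP => j; rewrite H.
Qed.

Lemma containsP p s : reflect (exists2 u, subseq u s & order_iso u p) (contains p s).
Proof.
apply: (iffP existsP) => [[m hm] | [u /subseqP [m hm ->] hu]].
  by exists (mask m s) => //; apply: mask_subseq.
have hm' : size m == size s by apply/eqP.
by exists (Tuple hm').
Qed.

Lemma c1324P s : reflect (exists a b c d, subseq [:: a; b; c; d] s /\ [/\ a < c, c < b & b < d])
  (contains [:: 1; 3; 2; 4] s).
Proof.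
apply: (iffP (containsP _ _)) => [[u hu /order_isoP [hs H]] | [a [b [c [d [hu [h1 h2 h3]]]]]]].
  case: u hu hs H => [|a [|b [|c [|d [|? ?]]]]] //= hu _ H.
  exists a, b, c, d; split => //.
  by rewrite (H 0 2) // (H 2 1) // (H 1 3).
exists [:: a; b; c; d] => //; apply/order_isoP; split => //.
move=> [|[|[|[|i]]]] [|[|[|[|j]]]] //= _ _; lia.
Qed.

Lemma c132P s : reflect (exists a b c, subseq [:: a; b; c] s /\ (a < c) && (c < b))
  (contains [:: 1; 3; 2] s).
Proof.
apply: (iffP (containsP _ _)) => [[u hu /order_isoP [hs H]] | [a [b [c [hu /andP [h1 h2]]]]]].
  case: u hu hs H => [|a [|b [|c [|? ?]]]] //= hu _ H.
  exists a, b, c; split => //.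
  by rewrite (H 0 2) // (H 2 1).
exists [:: a; b; c] => //; apply/order_isoP; split => //.
move=> [|[|[|i]]] [|[|[|j]]] //= _ _; lia.
Qed.

Lemma c213P s : reflect (exists a b c, subseq [:: a; b; c] s /\ (b < a) && (a < c))
  (contains [:: 2; 1; 3] s).
Proof.
apply: (iffP (containsP _ _)) => [[u hu /order_isoP [hs H]] | [a [b [c [hu /andP [h1 h2]]]]]].
  case: u hu hs H => [|a [|b [|c [|? ?]]]] //= hu _ H.
  exists a, b, c; split => //.
  by rewrite (H 1 0) // (H 0 2).
exists [:: a; b; c] => //; apply/order_isoP; split => //.
move=> [|[|[|i]]] [|[|[|j]]] //= _ _; lia.
Qed.

Lemma order_iso_map g t p : {mono g : u v / u < v} -> order_iso (map g t) p = order_iso t p.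
Proof.
move=> mg; apply/order_isoP/order_isoP => [] [hs H]; rewrite ?size_map in hs *; split => //.
  move=> i j hi hj; rewrite -H // !(nth_map 0) ?hs // mg //.
move=> i j hi hj; rewrite !(nth_map 0) ?hs // mg H //.
Qed.

Lemma contains_map p s g : {mono g : u v / u < v} -> contains p (map g s) = contains p s.
Proof.
move=> mg; apply/containsP/containsP => [[u /subseqP [m hm ->] hu] | [u hu hu']].
  exists (mask m s); first exact: mask_subseq.
  by rewrite -(order_iso_map _ _ mg) map_mask.
by exists (map g u); [apply: map_subseq | rewrite order_iso_map].
Qed.

Lemma sub_enum4 n (i j k l : 'I_n) : i < j -> j < k -> k < l ->
  subseq [:: i; j; k; l] (enum 'I_n).
Proof.
move=> h1 h2 h3; apply/(subseq_uniqP (enum_uniq _)).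
apply: (@irr_sorted_eq _ (fun x y : 'I_n => x < y)).
- by move=> x y z; apply: ltn_trans.
- by move=> x; rewrite ltnn.
- by rewrite /= h1 h2 h3.
- apply: sorted_filter; first by move=> x y z; apply: ltn_trans.
  by have := iota_ltn_sorted 0 n; rewrite -val_enum_ord sorted_map.
- by move=> x; rewrite mem_filter mem_enum andbT.
Qed.

Lemma sorted_sub n (v : seq 'I_n) : subseq v (enum 'I_n) -> sorted (fun x y : 'I_n => x < y) v.
Proof.
move=> /(map_subseq val); rewrite val_enum_ord => H.
have := subseq_sorted ltn_trans H (iota_ltn_sorted 0 n).
by rewrite sorted_map.
Qed.

Lemma occP n (s : 'S_n) : reflect (exists i j k l : 'I_n,
   [/\ i < j, j < k & k < l] /\ [/\ s i < s k, s k < s j & s j < s l])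
  (contains [:: 1; 3; 2; 4] (word s)).
Proof.
apply: (iffP (c1324P _)) => [[a [b [c [d [hu [h1 h2 h3]]]]]] | [i [j [k [l [[h1 h2 h3] [h4 h5 h6]]]]]]].
  move: hu => /subseqP [m hm]; rewrite /word -map_mask => E.
  have := mask_subseq m (enum 'I_n); move/sorted_sub.
  case: (mask m (enum 'I_n)) E => [|i [|j [|k [|l [|? ?]]]]] //= [ea eb ec ed].
  subst a b c d; case/and4P=> g1 g2 g3 _.
  by exists i, j, k, l; split; split => //; lia.
exists (s i).+1, (s j).+1, (s k).+1, (s l).+1; split; last by split.
by apply: (map_subseq (fun i => (s i).+1) (sub_enum4 h1 h2 h3)).
Qed.

Lemma contains_inv n (s : 'S_n) : contains [:: 1; 3; 2; 4] (word s) ->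
  contains [:: 1; 3; 2; 4] (word (s^-1)%g).
Proof.
case/occP => [i [j [k [l [[h1 h2 h3] [h4 h5 h6]]]]]].
apply/occP; exists (s i), (s k), (s j), (s l); rewrite !permK; split; split => //; lia.
Qed.

Lemma avoids_inv n (s : 'S_n) : avoids [:: 1; 3; 2; 4] (word (s^-1)%g) = avoids [:: 1; 3; 2; 4] (word s).
Proof.
rewrite /avoids; congr negb; apply/idP/idP; last exact: contains_inv.
by move/contains_inv; rewrite invgK.
Qed.

Lemma pos_word n (s : 'S_n) (v : 'I_n) : index (v.+1) (word s) = (s^-1)%g v.
Proof.
have inj : injective (fun i : 'I_n => (s i).+1).
  by move=> x y [] /val_inj /perm_inj.
by rewrite /word -{1}(permKV s v) (index_map inj) index_enum_ord.
Qed.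

Lemma subseq_rcons_cases (t w : seq nat) y : subseq t (rcons w y) ->
  subseq t w \/ exists t', t = rcons t' y /\ subseq t' w.
Proof.
elim: w t => [|z w IH] [|a t] /=; try by left.
- case: (a =P y) => [-> | _] // /eqP ->; by right; exists [::].
- case: (a =P z) => [-> | ne] /IH [H | [t' [E H]]].
  + by left.
  + by right; exists (z :: t'); rewrite E /= ?eqxx.
  + by left; rewrite /=; case: (a =P z).
  + by right; exists t'; split => //; apply: (subseq_trans H (subseq_cons _ _)).
Qed.

Lemma L1 x w : x \notin w -> x.+1 \notin w ->
  contains [:: 1; 3; 2; 4] (x :: rcons w x.+1) =
  [|| contains [:: 1; 3; 2; 4] w, contains [:: 1; 3; 2] [seq v <- w | v < x]
    | contains [:: 2; 1; 3] [seq v <- w | x.+1 < v]].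
Proof.
move=> hx hx1; apply/idP/idP.
  case/c1324P => [a [b [c [d [hu [h1 h2 h3]]]]]].
  move: hu => /=; case: eqP => [ea | na] hu.
    subst a; case: (subseq_rcons_cases hu) => [H | [t' [E H]]].
      have mb : b \in w by apply: (mem_subseq H); rewrite inE eqxx.
      have mc : c \in w by apply: (mem_subseq H); rewrite !inE eqxx orbT.
      have md : d \in w by apply: (mem_subseq H); rewrite !inE eqxx !orbT.
      apply/orP; right; apply/orP; right; apply/c213P; exists b, c, d; split; last by lia.
      rewrite subseq_filter H andbT /=.
      have nb : b != x.+1 by apply: contraNneq hx1 => <-.
      have nc : c != x.+1 by apply: contraNneq hx1 => <-.
      apply/and4P; split => //; lia.
    have := congr1 size E; rewrite size_rcons => -[] st.
    case: t' E H st => [|? [|? [|? ?]]] //= [eb ec ed]; subst; lia.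
  case: (subseq_rcons_cases hu) => [H | [t' [E H]]].
    by apply/orP; left; apply/c1324P; exists a, b, c, d.
  have := congr1 size E; rewrite size_rcons => -[] st.
  case: t' E H st => [|a' [|b' [|c' [|? ?]]]] //= [ea eb ec ed]; subst a' b' c' d => H _.
  have ma : a \in w by apply: (mem_subseq H); rewrite inE eqxx.
  have mb : b \in w by apply: (mem_subseq H); rewrite !inE eqxx orbT.
  have mc : c \in w by apply: (mem_subseq H); rewrite !inE eqxx !orbT.
  have nax : a != x by apply: contraNneq hx => <-.
  have nbx : b != x by apply: contraNneq hx => <-.
  have ncx : c != x by apply: contraNneq hx => <-.
  apply/orP; right; apply/orP; left; apply/c132P; exists a, b, c; split; last by lia.
  rewrite subseq_filter H andbT /=; apply/and4P; split => //; lia.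
case/orP => [|/orP []].
- case/c1324P => [a [b [c [d [hu hh]]]]]; apply/c1324P; exists a, b, c, d; split => //.
  apply: (subseq_trans hu); apply: (subseq_trans (subseq_rcons w x.+1)); exact: subseq_cons.
- case/c132P => [a [b [c [hu hh]]]]; move: hu; rewrite subseq_filter => /andP [/and4P [ha hb hc _] hu].
  apply/c1324P; exists a, b, c, x.+1; split; last by move: hh ha hb hc => /= /andP [? ?] ? ? ?; split; lia.
  apply: (subseq_trans _ (subseq_cons _ x)).
  by rewrite -!cats1 -[[:: a; b; c; x.+1]]/([:: a; b; c] ++ [:: x.+1]) subseq_cat2r.
- case/c213P => [a [b [c [hu hh]]]]; move: hu; rewrite subseq_filter => /andP [/and4P [ha hb hc _] hu].
  apply/c1324P; exists x, a, b, c; split; last by move: hh ha hb hc => /= /andP [? ?] ? ? ?; split; lia.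
  by rewrite /= eqxx; apply: (subseq_trans hu (subseq_rcons w x.+1)).
Qed.

Definition g0 (h v : nat) := if v < h then v else v.+2.
Definition gw (h v : nat) := if v <= h then v else v.+2.
Definition f0 (h v : nat) := if v < h then v else v - 2.

Lemma gw_mono h : {mono gw h : u v / u < v}.
Proof. move=> u v; rewrite /gw; case: (leqP u h) => ?; case: (leqP v h) => ?; apply/idP/idP; lia. Qed.

Definition papp m (p : 'S_m) (v : nat) : nat := if insub v is Some j then val (p j) else v.

Lemma papp_ord m (p : 'S_m) (j : 'I_m) : papp p j = p j.
Proof. by rewrite /papp valK. Qed.

Lemma papp_ex m (p : 'S_m) v : v < m -> exists j : 'I_m, val j = v /\ papp p v = p j.
Proof. move=> hv; exists (Ordinal hv); split => //; exact: papp_ord (Ordinal hv). Qed.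

Definition Dval m (p : 'S_m) (h i : nat) : nat :=
  if i == 0 then h else if i == m.+1 then h.+1 else g0 h (papp p i.-1).

Lemma Dval_lt m (p : 'S_m) h i : h <= m -> i < m.+2 -> Dval p h i < m.+2.
Proof.
move=> hh hi; rewrite /Dval; case: eqP => [_|i0]; first lia.
case: eqP => [_|im]; first lia.
have [j [ej ->]] := papp_ex p (ltac:(lia) : i.-1 < m).
rewrite /g0; have := ltn_ord (p j); case: (ltnP (p j) h) => ? ?; lia.
Qed.

Definition Dfun m (p : 'S_m) (h : 'I_m.+1) (i : 'I_m.+2) : 'I_m.+2 := inord (Dval p h i).

Lemma Dfun_val m (p : 'S_m) (h : 'I_m.+1) (i : 'I_m.+2) : val (Dfun p h i) = Dval p h i.
Proof. rewrite /Dfun; apply: inordK; apply: Dval_lt; [exact: ltn_ord h | exact: ltn_ord]. Qed.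

Lemma Dfun_inj m (p : 'S_m) (h : 'I_m.+1) : injective (Dfun p h).
Proof.
move=> i1 i2 /(congr1 val); rewrite !Dfun_val => E; apply: val_inj => /=.
have hh := ltn_ord h; have h1 := ltn_ord i1; have h2 := ltn_ord i2.
move: E; rewrite /Dval.
case: (nat_of_ord i1 =P 0) => [->|a1]; case: (nat_of_ord i2 =P 0) => [->|a2] //.
- case: (nat_of_ord i2 =P m.+1) => [|b2]; first lia.
  have [j [ej ->]] := papp_ex p (ltac:(lia) : (nat_of_ord i2).-1 < m).
  rewrite /g0; case: (ltnP (p j) h) => ? ?; lia.
- case: (nat_of_ord i1 =P m.+1) => [|b1]; first lia.
  have [j [ej ->]] := papp_ex p (ltac:(lia) : (nat_of_ord i1).-1 < m).
  rewrite /g0; case: (ltnP (p j) h) => ? ?; lia.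
case: (nat_of_ord i1 =P m.+1) => [->|b1]; case: (nat_of_ord i2 =P m.+1) => [->|b2] //.
- have [j [ej ->]] := papp_ex p (ltac:(lia) : (nat_of_ord i2).-1 < m).
  rewrite /g0; case: (ltnP (p j) h) => ? ?; lia.
- have [j [ej ->]] := papp_ex p (ltac:(lia) : (nat_of_ord i1).-1 < m).
  rewrite /g0; case: (ltnP (p j) h) => ? ?; lia.
have [j1 [ej1 ->]] := papp_ex p (ltac:(lia) : (nat_of_ord i1).-1 < m).
have [j2 [ej2 ->]] := papp_ex p (ltac:(lia) : (nat_of_ord i2).-1 < m).
move=> E.
have E' : nat_of_ord (p j1) = nat_of_ord (p j2).
  by move: E; rewrite /g0; case: (ltnP (p j1) h) => ?; case: (ltnP (p j2) h) => ? ?; lia.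
have /perm_inj ej : p j1 = p j2 by apply: val_inj.
move: ej1 ej2; rewrite ej; lia.
Qed.

Definition D m (d : 'S_m * 'I_m.+1) : 'S_m.+2 := perm (@Dfun_inj _ d.1 d.2).

Lemma D_val m (d : 'S_m * 'I_m.+1) i : val (D d i) = Dval d.1 d.2 i.
Proof. by rewrite permE Dfun_val. Qed.

Lemma word_D m (d : 'S_m * 'I_m.+1) :
  word (D d) = (d.2).+1 :: rcons (map (gw d.2) (word d.1)) (d.2).+2.
Proof.
rewrite /word enum_ordSl enum_ordSr map_cons !map_rcons -!map_comp.
rewrite D_val /Dval eqxx.
congr (_ :: rcons _ _).
  apply: eq_map => j /=; rewrite D_val /Dval /=.
  have hj := ltn_ord j.
  rewrite /bump leq0n add0n add1n eqSS ifN_eq; last by rewrite neq_ltn hj.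
  rewrite papp_ord /g0 /gw; case: (ltnP (d.1 j) d.2) => ?; lia.
rewrite D_val /Dval /=.
by rewrite /bump leq0n add0n add1n eqxx.
Qed.

Lemma D_dom m (d : 'S_m * 'I_m.+1) :
  avoids [:: 1; 3; 2; 4] (word (D d)) = (d \in dominoes m).
Proof.
case: d => p h; rewrite inE word_D /= /avoids L1; first last.
- by apply/mapP => -[v _]; rewrite /gw; case: (leqP v h) => ? ?; lia.
- by apply/mapP => -[v _]; rewrite /gw; case: (leqP v h) => ? ?; lia.
rewrite !negb_or contains_map ?gw_mono //.
have F1 : [seq v <- map (gw h) (word p) | v < h.+1] = map (gw h) [seq v <- word p | v <= h].
  rewrite filter_map; congr map; apply: eq_filter => v /=; rewrite /gw.
  by case: (leqP v h) => ?; apply/idP/idP; lia.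
have F2 : [seq v <- map (gw h) (word p) | h.+2 < v] = map (gw h) [seq v <- word p | h < v].
  rewrite filter_map; congr map; apply: eq_filter => v /=; rewrite /gw.
  by case: (leqP v h) => ?; apply/idP/idP; lia.
rewrite F1 F2.
rewrite !contains_map //.
all: exact: gw_mono.
Qed.

Lemma D_inj m : injective (@D m).
Proof.
move=> [p1 h1] [p2 h2] E.
have eh : h1 = h2.
  by apply: val_inj; have := congr1 (fun s : 'S_m.+2 => val (s ord0)) E; rewrite /= !D_val.
subst h2; congr pair; apply/permP => j; apply: val_inj.
have := congr1 (fun s : 'S_m.+2 => val (s (lift ord0 (widen_ord (leqnSn _) j)))) E.
have jm : (nat_of_ord j == m) = false by rewrite ltn_eqF.
rewrite /= !D_val /Dval /= /bump leq0n add0n add1n eqSS jm.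
rewrite !papp_ord /g0; case: (ltnP (p1 j) h1) => ?; case: (ltnP (p2 j) h1) => ? ?; lia.
Qed.

Definition T m := [set s : 'S_m.+2 | avoids [:: 1; 3; 2; 4] (word s) && (val (s ord_max) == (s ord0).+1)].

Definition Efun m (s : 'S_m.+2) (j : 'I_m) : 'I_m :=
  insubd j (f0 (s ord0) (s (lift ord0 (widen_ord (leqnSn _) j)))).

Lemma Efun_val m (s : 'S_m.+2) (H : val (s ord_max) == (s ord0).+1) (j : 'I_m) :
  let v := nat_of_ord (s (lift ord0 (widen_ord (leqnSn _) j))) in
  [/\ nat_of_ord (Efun s j) = f0 (s ord0) v, v != s ord0 & v != (s ord0).+1].
Proof.
move=> v.
have n0 : v != s ord0.
  apply/eqP => /val_inj /perm_inj /(congr1 val) /=; rewrite /bump leq0n; lia.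
have n1 : v != (s ord0).+1.
  rewrite -(eqP H); apply/eqP => /val_inj /perm_inj /(congr1 val) /=.
  rewrite /bump leq0n; have := ltn_ord j; lia.
split => //; rewrite /Efun val_insubd /f0 -/v.
have hv : v < m.+2 by apply: ltn_ord.
have hm : nat_of_ord (s ord_max) < m.+2 by apply: ltn_ord.
have H' : nat_of_ord (s ord_max) = (s ord0).+1 by apply/eqP.
move: n0 n1 => /eqP n0 /eqP n1; clearbody v.
case: (ltnP v (s ord0)) => ?; rewrite ifT //; lia.
Qed.

Lemma Efun_inj m (s : 'S_m.+2) (H : val (s ord_max) == (s ord0).+1) : injective (Efun s).
Proof.
move=> j1 j2 E.
have [e1 n01 n11] := Efun_val H j1.
have [e2 n02 n12] := Efun_val H j2.
have E2 := congr1 (@nat_of_ord m) E; rewrite e1 e2 /f0 in E2.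
move: E2 n01 n11 n02 n12.
set v1 := nat_of_ord (s (lift ord0 (widen_ord (leqnSn m) j1))).
set v2 := nat_of_ord (s (lift ord0 (widen_ord (leqnSn m) j2))).
move=> E2 /eqP n01 /eqP n11 /eqP n02 /eqP n12.
have ev : v1 = v2.
  clearbody v1 v2.
  move: E2; case: (ltnP v1 (s ord0)) => ?; case: (ltnP v2 (s ord0)) => ? ?; lia.
move: ev; rewrite /v1 /v2 => /val_inj /perm_inj /(congr1 val) /=.
rewrite /bump leq0n => ?; apply: ord_inj; lia.
Qed.

Lemma T_eq m : T m = @D m @: dominoes m.
Proof.
apply/setP => s; apply/idP/idP.
  rewrite inE => /andP [av H].
  have hs0 : nat_of_ord (s ord0) < m.+1.
    have := ltn_ord (s ord_max); rewrite (eqP H); lia.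
  have ED : D (perm (Efun_inj H), inord (s ord0)) = s.
    apply/permP => i; apply: val_inj; rewrite D_val /Dval /= inordK //.
    have hi := ltn_ord i.
    case: (nat_of_ord i =P 0) => [i0|i0].
      by congr (nat_of_ord (s _)); apply: val_inj.
    case: (nat_of_ord i =P m.+1) => [im|im].
      by rewrite -(eqP H); congr (nat_of_ord (s _)); apply: val_inj.
    have hj : i.-1 < m by lia.
    rewrite -[i.-1]/(nat_of_ord (Ordinal hj)) papp_ord permE.
    have [e n0 n1] := Efun_val H (Ordinal hj).
    rewrite e; move: n0 n1.
    have -> : lift ord0 (widen_ord (leqnSn m) (Ordinal hj)) = i.
      by apply: ord_inj; rewrite /= /bump leq0n; lia.
    move=> /eqP n0 /eqP n1.
    rewrite /g0 /f0; case: (ltnP (s i) (s ord0)) => ? //.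
      by rewrite ifT.
    rewrite ifF; first lia.
    apply/negbTE; rewrite -leqNgt; lia.
  apply/imsetP; exists (perm (Efun_inj H), inord (s ord0)) => //.
  by rewrite -D_dom ED.
case/imsetP => d hd ->; rewrite inE D_dom hd /= !D_val /Dval /=.
by rewrite eqxx.
Qed.

Lemma card_T m : #|T m| = #|dominoes m|.
Proof. by rewrite T_eq card_imset //; apply: D_inj. Qed.

Unset Implicit Arguments.
Theorem proposition2p1 (n : nat) (hn : 2 <= n) :
  #|Snk n 1 1| = #|dominoes (n - 2)|.
Proof.
case: n hn => [|[|m]] // _; have -> : m.+2 - 2 = m by lia.
rewrite -card_T.
have -> : Snk m.+2 1 1 = (fun s : 'S_m.+2 => (s^-1)%g) @^-1: T m.
  apply/setP => s; rewrite !inE avoids_inv /= andbT /pos.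
  rewrite (pos_word s ord_max) (pos_word s ord0) addn1.
  by [].
by rewrite card_preimset //; move=> x y; apply: invg_inj.
Qed.
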